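(* Let $d\ge 2$ be an integer, and let $(B_\ell)$, $(C_\ell)$, $(D_\ell)$, indexed by even integers $\ell\ge 6$, satisfy for every even $\ell\ge 8$ \begin{align*} B_\ell &= (d-1)D_{\ell-2}+d\,C_{\ell-2},\\ C_\ell &= (d-1)D_{\ell-2}+d\,B_{\ell-2},\\ D_\ell &= (d^2-3d+3)D_{\ell-2}+(d-1)^2C_{\ell-2}+(d-1)^2B_{\ell-2}, \end{align*} with initial values $B_6=(d+1)d(d-1)^3$, $C_6=(d+1)d(d^3-2d^2+3d-1)$, $D_6=(d+1)d(d-1)^2(d^2-2d+3)$. Then for every even $\ell\ge 6$, \begin{align*} B_\ell &= d(d^2-d+1)^{\ell/2-1}+\tfrac12(-1)^{\ell/2-1}d(d-1)(d-2)^{\ell/2-1}+\tfrac12(-1)^{\ell/2}(d+1)d^{\ell/2},\\ C_\ell &= \tfrac12(-1)^{\ell/2-1}(d-1)d(d-2)^{\ell/2-1}+d(d^2-d+1)^{\ell/2-1}-\tfrac12(-1)^{\ell/2}d^{\ell/2}(d+1),\\ D_\ell &= (d-1)d\left((d^2-d+1)^{\ell/2-1}-(-1)^{\ell/2-1}(d-2)^{\ell/2-1}\right). \end{align*} *)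

(* Defs.v *)
From mathcomp Require Import all_boot all_order all_algebra.
Set Implicit Arguments. Unset Strict Implicit. Unset Printing Implicit Defensive.

(* Main.v *)
Require Import Defs.
From mathcomp Require Import all_boot all_order all_algebra.
From mathcomp Require Import ring zify.
Import GRing.Theory Num.Theory.
Local Open Scope ring_scope.

(* Sequences indexed by ell : nat; only even ell >= 6 are meaningful.
   Values are taken in rat (the closed forms involve 1/2). *)
Theorem lemma10 (d : nat) (hd : (2 <= d)%N) (B C D : nat -> rat)
  (hB : forall l : nat, (8 <= l)%N -> ~~ odd l ->
     B l = (d%:R - 1) * D (l - 2)%N + d%:R * C (l - 2)%N)
  (hC : forall l : nat, (8 <= l)%N -> ~~ odd l ->
     C l = (d%:R - 1) * D (l - 2)%N + d%:R * B (l - 2)%N)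
  (hD : forall l : nat, (8 <= l)%N -> ~~ odd l ->
     D l = (d%:R ^+ 2 - 3 * d%:R + 3) * D (l - 2)%N
           + (d%:R - 1) ^+ 2 * C (l - 2)%N + (d%:R - 1) ^+ 2 * B (l - 2)%N)
  (hB6 : B 6%N = (d%:R + 1) * d%:R * (d%:R - 1) ^+ 3)
  (hC6 : C 6%N = (d%:R + 1) * d%:R * (d%:R ^+ 3 - 2 * d%:R ^+ 2 + 3 * d%:R - 1))
  (hD6 : D 6%N = (d%:R + 1) * d%:R * (d%:R - 1) ^+ 2 * (d%:R ^+ 2 - 2 * d%:R + 3)) :
  forall l : nat, (6 <= l)%N -> ~~ odd l ->
    let dd : rat := d%:R in
    let k : nat := (l %/ 2)%N in
    [/\ B l = dd * (dd ^+ 2 - dd + 1) ^+ k.-1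
              + 2^-1 * (-1) ^+ k.-1 * dd * (dd - 1) * (dd - 2) ^+ k.-1
              + 2^-1 * (-1) ^+ k * (dd + 1) * dd ^+ k,
        C l = 2^-1 * (-1) ^+ k.-1 * (dd - 1) * dd * (dd - 2) ^+ k.-1
              + dd * (dd ^+ 2 - dd + 1) ^+ k.-1
              - 2^-1 * (-1) ^+ k * dd ^+ k * (dd + 1)
      & D l = (dd - 1) * dd * ((dd ^+ 2 - dd + 1) ^+ k.-1
                               - (-1) ^+ k.-1 * (dd - 2) ^+ k.-1)].
Proof.
move=> l hl hodd.
have [m ->] : exists m, l = (2 * (m + 3))%N.
  exists (l %/ 2 - 3)%N. move/negbTE: hodd => ho.
  have := divn_eq l 2; rewrite modn2 ho /=; lia.
clear hl hodd.
elim: m => [|m IH].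
  rewrite /= hB6 hC6 hD6; split; rewrite !exprS !expr0; by field.
have e : (2 * (m.+1 + 3) - 2 = 2 * (m + 3))%N by lia.
have h8 : (8 <= 2 * (m.+1 + 3))%N by lia.
have hev : ~~ odd (2 * (m.+1 + 3)) by rewrite oddM.
have k1 : (2 * (m.+1 + 3) %/ 2 = (m + 3).+1)%N by rewrite mulKn //; lia.
have k0 : (2 * (m + 3) %/ 2 = (m + 3))%N by rewrite mulKn.
move: IH; rewrite k1 k0 /= => -[IB IC ID].
rewrite /= (hB _ h8 hev) (hC _ h8 hev) (hD _ h8 hev) e IB IC ID.
rewrite !addn3 !exprS.
set X := (_ ^+ m); set Y := ((-1) ^+ m); set Z := (_ ^+ m); set W := (_ ^+ m).
split; by field.
Qed.
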